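(* Let $N\ge3$ be an integer, $(N+2)/(N-2)<p<p_{JL}$ and $\lambda>0$. For $\alpha>0$ let $u(r;\alpha)$ be the unique solution of \[ u''+\frac{N-1}{r}u'+\lambda u+|u|^{p-1}u=0\ (r>0),\qquad u(0)=\alpha,\ u'(0)=0. \] Then for each $\alpha>0$, $u(\cdot;\alpha)$ has a zero in $(0,\infty)$.
   Context: The Joseph–Lundgren exponent is $p_{JL}=1+\frac{4}{N-4-2\sqrt{N-1}}$ for $N\ge11$ and $p_{JL}=\infty$ for $3\le N\le10$. *)

(* Defs.v *)
From Stdlib Require Import Reals Lra.
From Coquelicot Require Import Coquelicot.
Open Scope R_scope.

Definition pJL (N : nat) : Rbar :=
  if (N <=? 10)%nat then p_infty
  else Finite (1 + 4 / (INR N - 4 - 2 * sqrt (INR N - 1))).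

Definition nonlin (p s : R) : R := Rpower (Rabs s) (p - 1) * s.

Definition is_radial_solution (N : nat) (p lambda alpha : R)
    (u du : R -> R) : Prop :=
  (forall r, 0 < r -> is_derive u r (du r)) /\
  (forall r, 0 < r -> ex_derive du r /\
     Derive du r + (INR N - 1) / r * du r + lambda * u r + nonlin p (u r) = 0) /\
  u 0 = alpha /\
  filterlim u (at_right 0) (locally alpha) /\
  filterlim du (at_right 0) (locally 0).

(* Main.v *)
Require Import Defs.
From Stdlib Require Import Reals Lra Lia Classical.
From Coquelicot Require Import Coquelicot.
Open Scope R_scope.

Definition Wf (u du : R -> R) n k a r :=
  sqrt r ^ (S (S n)) * (du r * sin (k*(r-a)) - u r * (k * cos (k*(r-a)) - INR (S (S n))/(2*r) * sin (k*(r-a)))).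

Lemma W_deriv (u du : R -> R) n k a r (D : R) : 0 < r -> is_derive u r (du r) -> is_derive du r D ->
 is_derive (Wf u du n k a) r
  (sqrt r ^ (S (S n)) * (INR (S (S n))/r * du r * sin (k*(r-a)) + (INR (S (S n)))^2/(4*r*r) * u r * sin (k*(r-a))
     + D * sin (k*(r-a)) + k*k * u r * sin (k*(r-a)) - INR (S (S n))/(2*r*r) * u r * sin (k*(r-a)))).
Proof.
intros Hr Hu Hdu. unfold Wf.
auto_derive.
- repeat split; try lra; eexists; eauto.
- replace (Derive (fun x => u x) r) with (du r) by (symmetry; now apply is_derive_unique). replace (Derive (fun x => du x) r) with D by (symmetry; now apply is_derive_unique).
  change (match n with 0%nat => 1 | S _ => INR n + 1 end) with (INR (S n)).
  rewrite <- S_INR.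
  set (nr := INR (S (S n))).
  assert (Ht : 0 < sqrt r) by (apply sqrt_lt_R0; lra).
  assert (Htt : sqrt r * sqrt r = r) by (apply sqrt_sqrt; lra).
  set (t := sqrt r) in *. clearbody t.
  rewrite <- Htt. simpl. unfold Rminus. field. lra.
Qed.
Lemma upos (u du : R -> R) alpha : 0 < alpha ->
  (forall r, 0 < r -> is_derive u r (du r)) ->
  filterlim u (at_right 0) (locally alpha) ->
  (forall r, 0 < r -> u r <> 0) -> forall r, 0 < r -> 0 < u r.
Proof.
intros Ha Hd Hl Hnz r0 Hr0.
assert (Hc : forall x, 0 < x -> continuity_pt u x).
{ intros x Hx. apply continuity_pt_filterlim. apply (ex_derive_continuous (K:=R_AbsRing) (V:=R_NormedModule)).
  eexists; apply Hd; exact Hx. }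
destruct (Rtotal_order (u r0) 0) as [Hneg|[H0|Hpos]]; [|exfalso; exact (Hnz r0 Hr0 H0)|exact Hpos].
exfalso.
assert (He : 0 < alpha/2) by lra.
destruct (proj1 (filterlim_locally u alpha) Hl (mkposreal _ He)) as [d Hdd].
set (x0 := Rmin (d/2) (r0/2)).
assert (Hx0 : 0 < x0 < r0).
{ unfold x0. destruct d as [d dp]; simpl. split; [apply Rmin_glb_lt; lra| ].
  eapply Rle_lt_trans; [apply Rmin_r| lra]. }
assert (Hux : alpha/2 < u x0).
{ assert (Hb : ball 0 d x0).
  { unfold ball; simpl; unfold AbsRing_ball, abs, minus, plus, opp; simpl.
    rewrite Ropp_0, Rplus_0_r, Rabs_pos_eq by lra. unfold x0.
    destruct d as [d dp]; simpl. eapply Rle_lt_trans; [apply Rmin_l| lra]. }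
  specialize (Hdd x0 Hb (proj1 Hx0)).
  unfold ball in Hdd; simpl in Hdd; unfold AbsRing_ball, abs, minus, plus, opp in Hdd; simpl in Hdd.
  apply Rabs_lt_between in Hdd. lra. }
destruct (Ranalysis5.IVT_interv (fun x => - u x) x0 r0) as [z [Hz Hz0]].
- intros y Hy. apply continuity_pt_opp. apply Hc. lra.
- lra.
- lra.
- lra.
- apply (Hnz z); lra.
Qed.

Theorem proposition3p1 (N : nat) (p lambda : R) :
  (3 <= N)%nat ->
  (INR N + 2) / (INR N - 2) < p ->
  Rbar_lt (Finite p) (pJL N) ->
  0 < lambda ->
  forall (alpha : R), 0 < alpha ->
  forall (u du : R -> R), is_radial_solution N p lambda alpha u du ->
  exists r, 0 < r /\ u r = 0.
Proof.
intros HN _ _ Hl alpha Ha u du [Hd [Hode [_ [Hlim _]]]].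
apply NNPP; intro Hno.
assert (Hnz : forall r, 0 < r -> u r <> 0) by (intros r Hr Hu; apply Hno; exists r; auto).
pose proof (upos u du alpha Ha Hd Hlim Hnz) as Hpos.
destruct N as [|[|[|n]]]; try (exfalso; lia).
assert (HnrE : INR (S (S (S n))) - 1 = INR (S (S n))) by (rewrite (S_INR (S (S n))); ring).
set (nr := INR (S (S n))) in *.
assert (Hnr0 : 2 <= nr) by (unfold nr; rewrite !S_INR; pose proof (pos_INR n); lra).
set (k := sqrt (lambda/2)).
assert (Hk : 0 < k) by (apply sqrt_lt_R0; lra).
assert (Hkk : k * k = lambda/2) by (apply sqrt_sqrt; lra).
set (a := 1 + INR (S (S (S n))) ^ 2 / lambda).
assert (HNN : nr * nr <= INR (S (S (S n))) ^ 2). { unfold nr. rewrite (S_INR (S (S n))). pose proof (pos_INR (S (S n))). set (q := INR (S (S n))) in *. nra. }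
assert (Ha1 : 1 + nr * nr / lambda <= a).
{ unfold a. apply Rplus_le_compat_l. unfold Rdiv. apply Rmult_le_compat_r; [|lra].
  left; apply Rinv_0_lt_compat; lra. }
assert (Hnl : 0 <= nr * nr / lambda) by (apply Rdiv_le_0_compat; nra).
set (b := a + PI / k). assert (Hbdef : b = a + PI / k) by reflexivity.
assert (HPk : 0 < PI / k) by (apply Rdiv_lt_0_compat; [apply PI_RGT_0|lra]).
set (g := fun r => Rpower (Rabs (u r)) (p - 1)).
set (W' := fun r => sqrt r ^ (S (S n)) * (nr/r * du r * sin (k*(r-a)) + nr^2/(4*r*r) * u r * sin (k*(r-a))
     + Derive du r * sin (k*(r-a)) + k*k * u r * sin (k*(r-a)) - nr/(2*r*r) * u r * sin (k*(r-a)))).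
destruct (MVT_gen (Wf u du n k a) a b W') as [c [Hc Heq]].
- cbv zeta; intros x Hx. rewrite Rmin_left, Rmax_right in Hx by lra.
  apply W_deriv; [lra| apply Hd; lra|].
  destruct (Hode x ltac:(lra)) as [[l Hl'] _].
  rewrite (is_derive_unique _ _ _ Hl'). exact Hl'.
- cbv zeta; intros x Hx. rewrite Rmin_left, Rmax_right in Hx by lra.
  apply continuity_pt_filterlim.
  apply (ex_derive_continuous (K:=R_AbsRing) (V:=R_NormedModule)).
  destruct (Hode x ltac:(lra)) as [[l Hl'] _].
  eexists. apply W_deriv; [lra| apply Hd; lra|].
  exact Hl'.
- rewrite Rmin_left, Rmax_right in Hc by lra.
  assert (Hc0 : 0 < c) by lra.
  assert (HWa : Wf u du n k a a < 0).
  { unfold Wf. replace (k * (a - a)) with 0 by ring. rewrite sin_0, cos_0.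
    assert (0 < sqrt a ^ S (S n)) by (apply pow_lt; apply sqrt_lt_R0; lra).
    pose proof (Hpos a ltac:(lra)). fold nr.
    assert (0 < sqrt a ^ S (S n) * (u a * k)) by (apply Rmult_lt_0_compat; [lra|apply Rmult_lt_0_compat; lra]).
    replace (sqrt a ^ S (S n) * (du a * 0 - u a * (k * 1 - nr / (2 * a) * 0))) with (- (sqrt a ^ S (S n) * (u a * k))) by ring.
    lra. }
  assert (HWb : 0 < Wf u du n k a b).
  { unfold Wf. replace (k * (b - a)) with PI by (unfold b; field; lra). rewrite sin_PI, cos_PI.
    assert (0 < sqrt b ^ S (S n)) by (apply pow_lt; apply sqrt_lt_R0; lra).
    pose proof (Hpos b ltac:(lra)). fold nr.
    assert (0 < sqrt b ^ S (S n) * (u b * k)) by (apply Rmult_lt_0_compat; [lra|apply Rmult_lt_0_compat; lra]).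
    replace (sqrt b ^ S (S n) * (du b * 0 - u b * (k * -1 - nr / (2 * b) * 0))) with (sqrt b ^ S (S n) * (u b * k)) by ring.
    lra. }
  assert (HW'c : W' c <= 0).
  { unfold W'. destruct (Hode c Hc0) as [_ Hodec].
    rewrite HnrE in Hodec. unfold nonlin in Hodec.
    assert (HD : Derive du c = - (nr / c * du c) - lambda * u c - g c * u c)
      by (unfold g; lra).
    rewrite HD.
    assert (HP : 0 < sqrt c ^ S (S n)) by (apply pow_lt; apply sqrt_lt_R0; lra).
    assert (HS : 0 <= sin (k * (c - a))).
    { apply sin_ge_0; [nra|]. apply Rle_trans with (k * (b - a)); [nra|].
      right; unfold b; field; lra. }
    assert (Hg : 0 <= g c) by (unfold g, Rpower; left; apply exp_pos).
    pose proof (Hpos c Hc0) as Huc.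
    replace (sqrt c ^ S (S n) * (nr / c * du c * sin (k * (c - a)) + nr ^ 2 / (4 * c * c) * u c * sin (k * (c - a)) +
       (- (nr / c * du c) - lambda * u c - g c * u c) * sin (k * (c - a)) +
       k * k * u c * sin (k * (c - a)) - nr / (2 * c * c) * u c * sin (k * (c - a))))
      with ((sqrt c ^ S (S n) * u c * sin (k * (c - a))) * ((nr * (nr - 2) - 2 * lambda * (c * c)) / (4 * (c * c)) - g c))
      by (rewrite Hkk; field; lra).
    apply Rmult_le_0_l.
    + apply Rmult_le_pos; [|exact HS]. apply Rmult_le_pos; lra.
    + assert (Hq : nr * (nr - 2) - 2 * lambda * (c * c) <= 0).
      { assert (nr * nr <= lambda * a).
        { assert (HX : nr * nr / lambda * lambda = nr * nr) by (field; lra). pose proof (Rmult_le_compat_l lambda _ _ (Rlt_le _ _ Hl) Ha1). nra. }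
        assert (Hac : a <= c * c) by nra.
        pose proof (Rmult_le_compat_l lambda _ _ (Rlt_le _ _ Hl) Hac). nra. }
      assert ((nr * (nr - 2) - 2 * lambda * (c * c)) / (4 * (c * c)) <= 0).
      { unfold Rdiv. apply Rmult_le_0_r; [exact Hq|]. left; apply Rinv_0_lt_compat; nra. }
      lra. }
  assert (0 < b - a) by lra.
  nra.
Qed.
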